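(* Let $L$ be a Lelek fan, let $C\subseteq L$ be a subcontinuum of $L$ that is a Cantor fan, and let $f:L\to L$ be an embedding with $f(L)\subseteq C$. Then $f$ does not admit a retraction, i.e. there is no retraction from $L$ onto $f(L)$.
   Context: A continuum is a nonempty compact connected metric space. A dendroid is an arcwise connected, hereditarily unicoherent continuum. A point $x$ of a dendroid $X$ is a ramification point if $x$ is the top (the branch point) of some simple triod in $X$. A fan is a dendroid with at most one ramification point; this point, if it exists, is called the top of the fan. For a fan $X$, a point $x$ is an end point of $X$ if $x$ is an end point of every arc in $X$ containing $x$; $E(X)$ denotes the set of end points of $X$. A fan $X$ with top $v$ is smooth if for every $x\in X$ and every sequence $x_n\to x$ in $X$, the arcs from $v$ to $x_n$ converge (in the Hausdorff metric) to the arc from $v$ to $x$. A Lelek fan is a smooth fan $X$ with $\mathrm{Cl}(E(X))=X$. A Cantor fan is a continuum homeomorphic to $\bigcup_{c\in C}A_c\subseteq\mathbb R^2$, where $C\subseteq[0,1]$ is the Cantor middle-third set and $A_c$ is the straight segment from $(\tfrac12,0)$ to $(c,1)$. An embedding is a continuous map that is a homeomorphism onto its image. A retraction from a space $X$ onto a subspace $Y$ is a continuous map $r:X\to Y$ with $r(y)=y$ for all $y\in Y$; an embedding $f:X\to Z$ admits a retraction if there is a retraction from $Z$ onto $f(X)$. *)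

(* Defs.v *)
From HB Require Import structures.
From mathcomp Require Import all_boot all_order all_algebra.
From mathcomp Require Import all_classical all_reals all_analysis.
Set Implicit Arguments. Unset Strict Implicit. Unset Printing Implicit Defensive.
Import Order.TTheory GRing.Theory Num.Theory.
Import numFieldNormedType.Exports.
Local Open Scope classical_set_scope.
Local Open Scope ring_scope.

Section Embed.
Context {U V : topologicalType}.
Definition embed_on (A : set U) (g : U -> V) : Prop :=
  {within A, continuous g} /\
  (forall x y, A x -> A y -> g x = g y -> x = y) /\
  exists h : V -> U, {within g @` A, continuous h} /\ (forall x, A x -> h (g x) = x).
End Embed.

Definition unit_interval (R : realType) : set R := [set t : R | 0 <= t <= 1].

Section Continua.
Context {R : realType} {T : pseudoMetricType R}.

Definition continuum (A : set T) : Prop :=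
  A !=set0 /\ compact A /\ connected A.

Definition arc_from (a b : T) (A : set T) : Prop :=
  exists g : R -> T, embed_on (@unit_interval R) g /\
    g @` (@unit_interval R) = A /\ g 0 = a /\ g 1 = b.

Definition arc (A : set T) : Prop := exists a b, arc_from a b A.

Definition arc_end (A : set T) (x : T) : Prop := exists b, arc_from x b A.

Definition arcwise_connected (X : set T) : Prop :=
  forall x y, X x -> X y -> x <> y -> exists A, A `<=` X /\ arc_from x y A.

Definition hered_unicoherent (X : set T) : Prop :=
  forall P Q, P `<=` X -> Q `<=` X -> continuum P -> continuum Q ->
    connected (P `&` Q).

Definition dendroid (X : set T) : Prop :=
  continuum X /\ arcwise_connected X /\ hered_unicoherent X.

(* x is the top of a simple triod contained in X *)
Definition ramification_point (X : set T) (x : T) : Prop :=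
  exists (a1 a2 a3 : T) (A1 A2 A3 : set T),
    [/\ arc_from x a1 A1, arc_from x a2 A2 & arc_from x a3 A3] /\
    [/\ A1 `&` A2 = [set x], A1 `&` A3 = [set x] & A2 `&` A3 = [set x]] /\
    A1 `|` A2 `|` A3 `<=` X.

Definition fan (X : set T) : Prop :=
  dendroid X /\
  (forall x y, ramification_point X x -> ramification_point X y -> x = y).

Definition end_points (X : set T) : set T :=
  [set x | X x /\ forall A, arc A -> A `<=` X -> A x -> arc_end A x].

Definition arc_in (X : set T) (a b : T) (B : set T) : Prop :=
  (a = b /\ B = [set a]) \/ (a <> b /\ B `<=` X /\ arc_from a b B).

Definition eps_nbhd (B : set T) (e : R) : set T :=
  [set y | exists2 b, B b & ball b e y].

Definition hausdorff_cvg (Bn : nat -> set T) (B : set T) : Prop :=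
  forall e : R, 0 < e -> exists N : nat, forall n : nat, (N <= n)%N ->
    Bn n `<=` eps_nbhd B e /\ B `<=` eps_nbhd (Bn n) e.

Definition smooth_fan (X : set T) : Prop :=
  fan X /\ exists v, ramification_point X v /\
    forall (x : T) (u : nat -> T), (forall n, X (u n)) -> X x ->
      u @ \oo --> x ->
      forall (Bn : nat -> set T) (B : set T),
        (forall n, arc_in X v (u n) (Bn n)) -> arc_in X v x B ->
        hausdorff_cvg Bn B.

Definition lelek_fan (X : set T) : Prop :=
  smooth_fan X /\ closure (end_points X) = X.
End Continua.

Section CantorFan.
Context {R : realType}.

Fixpoint cantor_approx (n : nat) : set R :=
  match n with
  | 0 => @unit_interval R
  | n'.+1 => ((fun x => x / 3) @` cantor_approx n') `|`
             ((fun x => 2 / 3 + x / 3) @` cantor_approx n')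
  end.

Definition cantor_set : set R := \bigcap_(n in [set: nat]) cantor_approx n.

Definition fan_segment (c : R) : set (R * R) :=
  [set ((1 - t) * (1 / 2) + t * c, t) | t in @unit_interval R].

Definition cantor_fan_model : set (R * R) :=
  \bigcup_(c in cantor_set) fan_segment c.

Definition cantor_fan {T : topologicalType} (A : set T) : Prop :=
  exists g : R * R -> T, embed_on cantor_fan_model g /\ g @` cantor_fan_model = A.
End CantorFan.

(* Main.v *)
Require Import Defs.
From mathcomp Require Import all_boot all_order all_algebra.
From mathcomp Require Import all_classical all_reals all_analysis.
From mathcomp Require Import ring lra.
Local Open Scope classical_set_scope.

Module Helpers.
Import Order.TTheory GRing.Theory Num.Theory Num.Def.
Import numFieldNormedType.Exports.
Local Open Scope classical_set_scope.
Local Open Scope ring_scope.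
Set Implicit Arguments. Unset Strict Implicit. Unset Printing Implicit Defensive.

Section Gen.
Context {R : realType}.

Lemma withinP (U V : pseudoMetricType R) (A : set U) (f : U -> V) :
  {within A, continuous f} <-> forall x, A x -> forall e : R, 0 < e ->
    exists2 d : R, 0 < d & forall y, A y -> ball x d y -> ball (f x) e (f y).
Proof.
rewrite subspace_continuousP; split.
- move=> H x Ax e e0; have /cvg_ballP/(_ e e0) := H x Ax.
  rewrite /within /= => /nbhs_ballP [d d0 Hd]; exists d => // y Ay bxy.
  exact: Hd.
- move=> H x Ax; apply/cvg_ballP => e e0.
  have [d d0 Hd] := H x Ax e e0.
  rewrite /within /=; apply/nbhs_ballP; exists d => // y bxy Ay; exact: Hd.
Qed.

Lemma ballR (x y e : R) : ball x e y <-> `|x - y| < e.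
Proof. by rewrite /ball /=. Qed.

Lemma ballRR (x y : R * R) e : ball x e y <-> ball x.1 e y.1 /\ ball x.2 e y.2.
Proof. by []. Qed.
End Gen.
Section Cantor.
Context {R : realType}.

Lemma cantor_approx01 n (x : R) : cantor_approx n x -> 0 <= x <= 1.
Proof.
elim: n x => [|n IH] x /=; first by [].
case=> -[a /IH /andP[a0 a1] <-].
- by apply/andP; split; lra.
- by apply/andP; split; lra.
Qed.

Lemma cantor_gap_n n (x y : R) : cantor_approx n x -> cantor_approx n y ->
  x < y -> (3 ^+ n)^-1 < y - x -> exists2 d, x < d < y & ~ cantor_approx n d.
Proof.
elim: n x y => [|n IH] x y /=.
  move=> /andP[x0 x1] /andP[y0 y1] xy; rewrite expr0 invr1 => h; lra.
have e3 : (3 ^+ n.+1 : R)^-1 = (3 ^+ n)^-1 / 3 by rewrite exprS invfM mulrC.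
have p3 : (0 : R) < (3 ^+ n)^-1 by rewrite invr_gt0 exprn_gt0.
rewrite e3.
case=> -[a Aa <-] [] -[b Ab <-] xy hd.
- have ab : a < b by lra.
  have [d /andP[ad db] nd] := IH a b Aa Ab ab ltac:(lra).
  exists (d / 3); first by apply/andP; split; lra.
  have /andP[_ b1] := cantor_approx01 Ab.
  case=> -[a' Aa' e].
  + by apply: nd; have -> : d = a' by lra.
  + have /andP[a'0 _] := cantor_approx01 Aa'; lra.
- have /andP[a0 a1] := cantor_approx01 Aa; have /andP[b0 b1] := cantor_approx01 Ab.
  exists (1/2); first by apply/andP; split; lra.
  case=> -[a' Aa' e]; have /andP[a'0 a'1] := cantor_approx01 Aa'; lra.
- have /andP[a0 a1] := cantor_approx01 Aa; have /andP[b0 b1] := cantor_approx01 Ab.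
  lra.
- have ab : a < b by lra.
  have [d /andP[ad db] nd] := IH a b Aa Ab ab ltac:(lra).
  exists (2/3 + d / 3); first by apply/andP; split; lra.
  have /andP[a0 _] := cantor_approx01 Aa.
  case=> -[a' Aa' e].
  + have /andP[_ a'1] := cantor_approx01 Aa'; lra.
  + by apply: nd; have -> : d = a' by lra.
Qed.

Lemma cantor01 (x : R) : cantor_set x -> 0 <= x <= 1.
Proof. by move=> H; apply: (@cantor_approx01 0); exact: (H 0%N I). Qed.

Lemma cantor_gap (x y : R) : cantor_set x -> cantor_set y -> x < y ->
  exists2 d, x < d < y & ~ cantor_set d.
Proof.
move=> cx cy xy.
have yx0 : 0 < y - x by lra.
pose n := Num.bound ((y - x)^-1).
have hb : (y - x)^-1 < n%:R by apply: archi_boundP; rewrite invr_ge0 ltW.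
have hn : (n%:R : R) <= 3 ^+ n.
  by rewrite -natrX ler_nat ltnW // ltn_expl.
have h3 : (3 ^+ n : R)^-1 < y - x.
  rewrite -[y - x]invrK ltf_pV2 ?posrE ?invr_gt0 ?exprn_gt0 //.
  exact: lt_le_trans hb hn.
have [d dxy nd] := cantor_gap_n (cx n I) (cy n I) xy h3.
by exists d => // H; apply: nd; exact: (H n I).
Qed.
End Cantor.
Section M. Context {R : realType}.
Definition sig (c t : R) : R * R := ((1 - t) * (1 / 2) + t * c, t).
Definition topM : R * R := (1/2, 0).
Definition Lc (z : R * R) : R := (z.1 - (1 - z.2) * (1/2)) / z.2.
Notation MM := (@cantor_fan_model R).

Lemma sig0 c : sig c 0 = topM.
Proof. by rewrite /sig /topM subr0 mul1r mul0r addr0. Qed.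

Lemma Lc_sig c t : t != 0 -> Lc (sig c t) = c.
Proof. move=> t0; rewrite /Lc /sig /=; field; exact: t0. Qed.

Lemma MP z : MM z <-> exists c t, [/\ cantor_set c, 0 <= t <= 1 & z = sig c t].
Proof.
split.
- by case=> c cc [t tI <-]; exists c, t; split.
- by case=> c [t [cc tI ->]]; exists c => //; exists t.
Qed.

Lemma sig_inj c t c' t' : t != 0 -> sig c t = sig c' t' -> c = c' /\ t = t'.
Proof.
move=> t0 e; have tt : t = t' by have := congr1 snd e.
split => //; rewrite -(Lc_sig c t0) e -tt Lc_sig //.
Qed.

Lemma M_top z : MM z -> z.2 = 0 -> z = topM.
Proof. by case/MP=> c [t [_ _ ->]] /= ->; rewrite sig0. Qed.

Lemma M_nontop z : MM z -> z <> topM ->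
  [/\ 0 < z.2, z.2 <= 1, cantor_set (Lc z) & z = sig (Lc z) z.2].
Proof.
case/MP=> c [t [cc /andP[t0 t1] ->]] ntop.
have tn0 : t != 0 by apply/eqP => e; apply: ntop; rewrite e sig0.
rewrite /= Lc_sig //; split => //; rewrite lt_neqAle t0 andbT eq_sym //.
Qed.

Lemma sig_M c t : cantor_set c -> 0 <= t <= 1 -> MM (sig c t).
Proof. by move=> cc tI; apply/MP; exists c, t. Qed.

Lemma sig_dist c c' t t' : 0 <= t' <= 1 -> 0 <= c <= 1 -> forall e, 0 < e ->
   `|c - c'| < e / 3 -> `|t - t'| < e / 3 -> ball (sig c t) e (sig c' t').
Proof.
move=> /andP[t'0 t'1] /andP[c0 c1] e e0 hc ht; split => /=; last first.
  by apply/ballR; lra.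
apply/ballR.
have -> : (1 - t) * (1 / 2) + t * c - ((1 - t') * (1 / 2) + t' * c') =
   (t' - t) * (1/2) + (t - t') * c + t' * (c - c') by ring.
rewrite (le_lt_trans (ler_normD _ _)) // (le_lt_trans (lerD (ler_normD _ _) (lexx _))) //.
rewrite [`|(t' - t) * _|]normrM [`|(t - t') * _|]normrM [`|t' * _|]normrM.
have h1 : `|t' - t| * `|1/2| <= `|t - t'| * (1/2).
  by rewrite distrC [`|1/2|]ger0_norm.
have h2 : `|t - t'| * `|c| <= `|t - t'| * 1.
  by apply: ler_wpM2l => //; rewrite ger0_norm.
have h3 : `|t'| * `|c - c'| <= 1 * `|c - c'|.
  by apply: ler_wpM2r => //; rewrite ger0_norm.
have : 0 <= `|t - t'| by [].
have : 0 <= `|c - c'| by [].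
lra.
Qed.
End M.
Section Arc. Context {R : realType}.
Notation MM := (@cantor_fan_model R).

Lemma snd_cont : continuous (fun z : R * R => z.2).
Proof. by case=> a b; exact: cvg_snd. Qed.

Lemma Lc_cont (z : R * R) : z.2 != 0 -> {for z, continuous (@Lc R)}.
Proof.
move=> z2.
have h1 : (fun x : R * R => x.1) @ z --> z.1 by case: z {z2} => a b; exact: cvg_fst.
have h2 : (fun x : R * R => x.2) @ z --> z.2 by case: z {z2 h1} => a b; exact: cvg_snd.
rewrite /continuous_at /Lc.
apply: cvgM; last exact: cvgV.
apply: cvgB => //; apply: cvgM => //; [apply: cvgB => //; exact: cvg_cst | exact: cvg_cst].
Qed.

Lemma itvP' (a b x : R) : (x \in `[a, b]) = (a <= x <= b).
Proof. by rewrite in_itv. Qed.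

Lemma const_cantor (h : R -> R) a b : a <= b -> {within `[a, b], continuous h} ->
  (forall t, a <= t <= b -> cantor_set (h t)) -> forall t, a <= t <= b -> h t = h b.
Proof.
move=> ab hc hC t /andP[a_t tb].
apply: contrapT => ne.
have [lt|gt] : h t < h b \/ h b < h t.
  by case: (ltgtP (h t) (h b)) => [x|x|x]; [left|right|].
- have [d /andP[d1 d2] nd] := cantor_gap (hC t ltac:(lra)) (hC b ltac:(lra)) lt.
  have sub : `[t, b] `<=` `[a, b].
    by move=> x /=; rewrite !itvP' => /andP[? ?]; apply/andP; split; lra.
  have [c] := IVT tb (continuous_subspaceW sub hc) (v := d) ltac:(rewrite ge_min le_max; lra).
  rewrite itvP' => /andP[tc cb] hcd; apply: nd; rewrite -hcd; apply: hC; lra.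
- have [d /andP[d1 d2] nd] := cantor_gap (hC b ltac:(lra)) (hC t ltac:(lra)) gt.
  have sub : `[t, b] `<=` `[a, b].
    by move=> x /=; rewrite !itvP' => /andP[? ?]; apply/andP; split; lra.
  have [c] := IVT tb (continuous_subspaceW sub hc) (v := d) ltac:(rewrite ge_min le_max; lra).
  rewrite itvP' => /andP[tc cb] hcd; apply: nd; rewrite -hcd; apply: hC; lra.
Qed.

Lemma arc_leg (S : set (R * R)) (phi : R -> R * R) t0 t1 : S `<=` MM -> t0 <= t1 ->
  {within `[t0, t1], continuous phi} -> (forall t, t0 <= t <= t1 -> S (phi t)) ->
  (forall t, t0 < t <= t1 -> phi t <> topM) ->
  forall u, 0 < u -> minr (phi t0).2 (phi t1).2 <= u <= maxr (phi t0).2 (phi t1).2 ->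
  S (sig (Lc (phi t1)) u).
Proof.
move=> SM t01 pc pS pnt u u0 hu.
have pc2 : {within `[t0, t1], continuous (fun t => (phi t).2)}.
  by apply: (@within_continuous_comp _ _ _ _ phi (fun z : R * R => z.2)) => // z _; exact: snd_cont.
have [t] := IVT t01 pc2 hu; rewrite itvP' => /andP[t0t tt1] ptu.
have ntop : phi t <> topM by move=> e; move: ptu; rewrite e /= => e0; lra.
have nt' : forall t', t <= t' <= t1 -> phi t' <> topM.
  move=> t' /andP[h1 h2]; have [->//|ne] := eqVneq t' t.
  have ltt : t < t' by rewrite lt_neqAle eq_sym ne h1.
  by apply: pnt; apply/andP; split; lra.
have Sp : forall t', t <= t' <= t1 -> S (phi t').
  by move=> t' /andP[? ?]; apply: pS; apply/andP; split; lra.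
have sub : `[t, t1] `<=` `[t0, t1].
  by move=> x /=; rewrite !itvP' => /andP[? ?]; apply/andP; split; lra.
have hL : forall t', t <= t' <= t1 -> Lc (phi t') = Lc (phi t1).
  apply: (const_cantor (h := fun t => Lc (phi t))) => //.
  - apply: (@within_continuous_comp _ _ _ _ phi (@Lc R)); last exact: continuous_subspaceW sub pc.
    move=> z; rewrite inE => -[t' /=]; rewrite itvP' => ht' <-.
    have [h0 _ _ _] := M_nontop (SM _ (Sp _ ht')) (nt' _ ht').
    by apply: Lc_cont; rewrite gt_eqF.
  - by move=> t' ht'; have [_ _ ? _] := M_nontop (SM _ (Sp _ ht')) (nt' _ ht').
have [_ _ _ e] := M_nontop (SM _ (Sp t ltac:(lra))) ntop.
by rewrite -(hL t ltac:(lra)) -ptu -e; apply: Sp; lra.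
Qed.
End Arc.
Section Unif. Context {R : realType}.
Notation MM := (@cantor_fan_model R).

Lemma unif (rho : R * R -> R) c s1 s2 : {within MM, continuous rho} -> cantor_set c ->
  0 <= s1 -> s2 <= 1 -> (forall s, s1 <= s <= s2 -> rho (sig c s) = s) ->
  forall e, 0 < e -> exists2 d, 0 < d & forall c', cantor_set c' -> `|c - c'| < d ->
    forall s, s1 <= s <= s2 -> `|rho (sig c' s) - s| < e.
Proof.

move=> rc cc s10 s21 hid e e0.
have := @segment_compact R s1 s2.
move=> /compact_near_coveringP /near_covering_withinP cov.
have := cov R (nbhs c) (fun c' s => cantor_set c' -> `|rho (sig c' s) - s| < e) _.
case.
- move=> x; rewrite /= itvP' => /andP[x1 x2].
  have hw := proj1 (withinP MM rho) rc.
  have hM : MM (sig c x) by apply: sig_M => //; apply/andP; split; lra.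
  have e2 : 0 < e / 2 by lra.
  have [d d0 hd] := hw (sig c x) hM (e / 2) e2.
  have dm : 0 < Num.min (d / 3) (e / 2) by rewrite lt_min; apply/andP; split; lra.
  have d3 : 0 < d / 3 by lra.
  exists (ball x (Num.min (d / 3) (e / 2)), ball c (d / 3)); first split.
  + exact: nbhsx_ballx.
  + exact: nbhsx_ballx.
  case=> x' i /= [/ballR bx /ballR bi].
  rewrite itvP' => /andP[x'1 x'2] ci.
  move: bx; rewrite lt_min => /andP[bx1 bx2].
  have x'I : 0 <= x' <= 1 by apply/andP; split; lra.
  have hM' : MM (sig i x') by apply: sig_M.
  have hb := hd (sig i x') hM' (sig_dist x'I (cantor01 cc) d0 bi bx1).
  have xI : s1 <= x <= s2 by apply/andP; split; lra.
  move: hb; rewrite hid // => /ballR hb.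
  have : `|rho (sig i x') - x'| <= `|x - rho (sig i x')| + `|x - x'|.
    have -> : rho (sig i x') - x' = - (x - rho (sig i x')) + (x - x') by ring.
    by rewrite (le_trans (ler_normD _ _)) // normrN.
  lra.
- move=> d d0 hd; exists d => // c' c'c dc s hs.
  have bc : ball c d c' by apply/ballR.
  by apply: (hd c' bc) => //=; rewrite itvP'.
Qed.
End Unif.

Section Gen2. Context {R : realType}.
Lemma wcomp (U V W : pseudoMetricType R) (A : set U) (B : set V) (f : U -> V) (g : V -> W) :
  {within A, continuous f} -> (forall x, A x -> B (f x)) -> {within B, continuous g} ->
  {within A, continuous (g \o f)}.
Proof.
move=> /withinP fc AB /withinP gc; apply/withinP => x Ax e e0.
have [d1 d10 h1] := gc (f x) (AB x Ax) e e0.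
have [d2 d20 h2] := fc x Ax d1 d10.
by exists d2 => // y Ay bxy; apply: h1; [exact: AB|exact: h2].
Qed.

Lemma sig_cont (c : R) (A : set R) : 0 <= c <= 1 -> (forall t, A t -> 0 <= t <= 1) ->
  {within A, continuous (sig c)}.
Proof.
move=> cI AI; apply/withinP => x Ax e e0; exists (e / 3); first lra.
move=> y Ay /ballR bxy; apply: sig_dist => //; first exact: AI.
by rewrite subrr normr0; lra.
Qed.

Lemma lin_cont (lo hi : R) (A : set R) : 0 <= hi - lo <= 1 ->
  {within A, continuous (fun t => lo + t * (hi - lo))}.
Proof.
move=> /andP[h0 h1]; apply/withinP => x Ax e e0; exists e => // y Ay /ballR bxy.
apply/ballR.
have -> : lo + x * (hi - lo) - (lo + y * (hi - lo)) = (x - y) * (hi - lo) by ring.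
rewrite normrM (ger0_norm h0).
have : `|x - y| * (hi - lo) <= `|x - y| * 1 by apply: ler_wpM2l.
lra.
Qed.

Lemma glob_within (U V : topologicalType) (A : set U) (f : U -> V) :
  continuous f -> {within A, continuous f}.
Proof. exact: continuous_subspaceT. Qed.
End Gen2.

Section Main.
Context {R : realType} {T : pseudoMetricType R}.
Notation MM := (@cantor_fan_model R).
Variables (g : R * R -> T) (gi : T -> R * R) (f fi r : T -> T).
Hypothesis gc : {within MM, continuous g}.
Hypothesis gii : forall z, MM z -> gi (g z) = z.
Hypothesis gic : {within g @` MM, continuous gi}.
Hypothesis fc : continuous f.
Hypothesis fii : forall x, fi (f x) = x.
Hypothesis fic : {within range f, continuous fi}.
Hypothesis fC : range f `<=` g @` MM.
Hypothesis rc : continuous r.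
Hypothesis rf : range r `<=` range f.
Hypothesis rid : forall y, range f y -> r y = y.

Definition Phi x := gi (f x).
Definition KM := range Phi.

Lemma Phi_M x : MM (Phi x).
Proof. by have [z Mz e] := fC (imageT f x); rewrite /Phi -e gii. Qed.

Lemma g_Phi x : g (Phi x) = f x.
Proof. by have [z Mz e] := fC (imageT f x); rewrite /Phi -e gii. Qed.

Lemma Phi_inj x y : Phi x = Phi y -> x = y.
Proof. by move=> e; rewrite -(fii x) -(fii y) -!g_Phi e. Qed.

Lemma KM_M : KM `<=` MM.
Proof. by move=> z [x _ <-]; exact: Phi_M. Qed.

Lemma Phi_fi z : KM z -> Phi (fi (g z)) = z.
Proof. by case=> x _ <-; rewrite g_Phi fii. Qed.

Lemma Phi_cont : continuous Phi.
Proof.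
apply/continuous_subspace_setT.
apply: (@wcomp _ _ _ _ setT (g @` MM) f gi).
- by move: fc; rewrite continuous_subspace_setT.
- by move=> x _; apply: fC; exists x.
- exact: gic.
Qed.

Lemma Phi2_cont : continuous (fun x => (Phi x).2).
Proof. by move=> x; apply: continuous_comp; [exact: Phi_cont | exact: snd_cont]. Qed.

Definition rho z := gi (r (g z)).

Lemma rho_cont : {within MM, continuous rho}.
Proof.
apply: (@wcomp _ _ _ _ MM (g @` MM) (r \o g) gi).
- apply: (@wcomp _ _ _ _ MM setT g r) => //.
  by move: rc; rewrite continuous_subspace_setT.
- by move=> z _ /=; apply: fC; apply: rf; exists (g z).
- exact: gic.
Qed.

Lemma rho_KM z : KM (rho z).
Proof. by have [x _ e] := rf (imageT r (g z)); exists x => //; rewrite /Phi e. Qed.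

Lemma rho_id z : KM z -> rho z = z.
Proof. by case=> x _ <-; rewrite /rho g_Phi rid ?imageT // /Phi. Qed.

Lemma KM_g z : KM z -> range f (g z).
Proof. by case=> x _ <-; rewrite g_Phi; exists x. Qed.

Lemma sub_unit (a b : R) : 0 <= a -> b <= 1 -> `[a, b] `<=` @unit_interval R.
Proof. by move=> a0 b1 t /=; rewrite itvP' /unit_interval /= => /andP[? ?]; apply/andP; split; lra. Qed.

Lemma endc e c' lo hi y : end_points setT e -> cantor_set c' -> 0 <= lo -> lo < y -> y < hi ->
  hi <= 1 -> (forall u, lo <= u <= hi -> KM (sig c' u)) -> Phi e = sig c' y -> False.
Proof.
move=> ee cc lo0 loy yhi hi1 hK hPe.
pose lin t := lo + t * (hi - lo).
pose gam t := fi (g (sig c' (lin t))).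
have hl0 : 0 < hi - lo by lra.
have linI : forall t, (@unit_interval R) t -> lo <= lin t <= hi.
  move=> t /andP[t0 t1]; rewrite /lin; apply/andP; split; nra.
have KMp : forall t, (@unit_interval R) t -> KM (sig c' (lin t)) by move=> t /linI; exact: hK.
have Pg : forall t, (@unit_interval R) t -> Phi (gam t) = sig c' (lin t).
  by move=> t /KMp; exact: Phi_fi.
have c01 := cantor01 cc.
have gcont : {within (@unit_interval R), continuous gam}.
  apply: (@wcomp _ _ _ _ (@unit_interval R) (range f) (g \o (sig c' \o lin)) fi) => //.
  - apply: (@wcomp _ _ _ _ (@unit_interval R) MM (sig c' \o lin) g) => //.
    + apply: (@wcomp _ _ _ _ (@unit_interval R) ((@unit_interval R)) lin (sig c')).
      * by apply: lin_cont; apply/andP; split; lra.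
      * by move=> t /linI /andP[? ?]; apply/andP; split; lra.
      * by apply: sig_cont => // t.
    + by move=> t /KMp; exact: KM_M.
  - by move=> t /KMp /KM_g.
have emb : embed_on ((@unit_interval R)) gam.
  split => //; split.
  - move=> a b ua ub /(congr1 Phi); rewrite !Pg // => /(congr1 snd) /=.
    rewrite /lin => h; have : (a - b) * (hi - lo) = 0 by lra.
    by move/eqP; rewrite mulf_eq0 => /orP[/eqP|/eqP]; lra.
  - exists (fun x => ((Phi x).2 - lo) / (hi - lo)); split.
    + apply: glob_within => x; apply: cvgM; last exact: cvg_cst.
      by apply: cvgB; [exact: Phi2_cont | exact: cvg_cst].
    + by move=> t ut; rewrite Pg //= /lin; field; lra.
pose A := gam @` ((@unit_interval R)).
have te : (@unit_interval R) ((y - lo) / (hi - lo)).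
  apply/andP; split; first by apply: divr_ge0; lra.
  by rewrite ler_pdivrMr // mul1r; lra.
have Ae : A e.
  exists ((y - lo) / (hi - lo)) => //.
  rewrite /gam /lin.
  have -> : lo + (y - lo) / (hi - lo) * (hi - lo) = y by field; lra.
  by rewrite -hPe g_Phi fii.
have arcA : @Defs.arc R T A by exists (gam 0), (gam 1), gam.
case: ee => _ /(_ A arcA (fun _ _ => I) Ae) [b [gam' [[gc' [inj' _]] [img [g0 g1]]]]].
have ppt : forall t, (@unit_interval R) t -> exists2 s, (@unit_interval R) s & Phi (gam' t) = sig c' (lin s).
  move=> t ut; have : A (gam' t) by rewrite -img; exists t.
  by case=> s us <-; exists s => //; exact: Pg.
have eq2 : forall t1 t2, (@unit_interval R) t1 -> (@unit_interval R) t2 ->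
    (Phi (gam' t1)).2 = (Phi (gam' t2)).2 -> t1 = t2.
  move=> t1 t2 u1 u2; have [s1 _ e1] := ppt t1 u1; have [s2 _ e2] := ppt t2 u2.
  rewrite e1 e2 /= => h; apply: inj' => //; apply: Phi_inj.
  by rewrite e1 e2 /sig h.
pose psi t := (Phi (gam' t)).2.
have psic : {within (@unit_interval R), continuous psi}.
  apply: (@within_continuous_comp _ _ _ (@unit_interval R) gam' (fun x => (Phi x).2)) => //.
  by move=> z _; exact: Phi2_cont.
have u0 : (@unit_interval R) 0 by apply/andP; split; lra.
have u1 : (@unit_interval R) 1 by apply/andP; split; lra.
have psi0 : psi 0 = y by rewrite /psi g0 hPe.
have [tl utl etl] : exists2 tl, (@unit_interval R) tl & psi tl = lo.
  have : A (gam 0) by exists 0.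
  rewrite -img => -[tl utl etl]; exists tl => //.
  by rewrite /psi etl Pg //= /lin mul0r addr0.
have [th uth eth] : exists2 th, (@unit_interval R) th & psi th = hi.
  have : A (gam 1) by exists 1.
  rewrite -img => -[th uth eth]; exists th => //.
  by rewrite /psi eth Pg //= /lin mul1r; ring.
have key : forall a bb, (@unit_interval R) a -> (@unit_interval R) bb -> a <= bb ->
    minr (psi a) (psi bb) <= y <= maxr (psi a) (psi bb) -> 0 < a -> False.
  move=> a bb /andP[a0 a1] /andP[b0 b1] ab hy a_pos.
  have [t] := IVT ab (continuous_subspaceW (sub_unit a0 b1) psic) hy.
  rewrite itvP' => /andP[at1 tb1] pt.
  have ut : (@unit_interval R) t by apply/andP; split; lra.
  have := eq2 t 0 ut u0; rewrite -/(psi t) -/(psi 0) pt psi0 => /(_ erefl) t0.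
  lra.
have tl0 : 0 < tl.
  move: utl => /andP[tl0 _]; rewrite lt_neqAle tl0 andbT; apply/eqP => e0.
  by move: etl; rewrite -e0 psi0; lra.
have th0 : 0 < th.
  move: uth => /andP[th0 _]; rewrite lt_neqAle th0 andbT; apply/eqP => e0.
  by move: eth; rewrite -e0 psi0; lra.
case: (lerP tl th) => h.
- apply: (key tl th) => //; rewrite etl eth ge_min le_max; lra.
- apply: (key th tl) => //; [exact: ltW| rewrite etl eth ge_min le_max; lra].
Qed.

Lemma leg_const (S : set (R * R)) (phi : R -> R * R) t0 t1 : S `<=` MM -> t0 <= t1 ->
  {within `[t0, t1], continuous phi} -> (forall t, t0 <= t <= t1 -> S (phi t)) ->
  (forall t, t0 <= t <= t1 -> phi t <> topM) ->
  forall t, t0 <= t <= t1 -> Lc (phi t) = Lc (phi t1).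
Proof.
move=> SM t01 pc pS pnt.
apply: (const_cantor (h := fun t => Lc (phi t))) => //.
- apply: (@within_continuous_comp _ _ _ _ phi (@Lc R)) => //.
  move=> z; rewrite inE => -[t' /=]; rewrite itvP' => ht' <-.
  have [h0 _ _ _] := M_nontop (SM _ (pS _ ht')) (pnt _ ht').
  by apply: Lc_cont; rewrite gt_eqF.
- by move=> t' ht'; have [_ _ ? _] := M_nontop (SM _ (pS _ ht')) (pnt _ ht').
Qed.

Hypothesis arcw : arcwise_connected [set: T].

Lemma arc_seg xa xb : xa <> xb -> Phi xb <> topM ->
  exists2 m, (m = 0 \/ [/\ m = (Phi xa).2, Phi xa <> topM & Lc (Phi xa) = Lc (Phi xb)]) &
    forall u, 0 < u -> minr m (Phi xb).2 <= u <= maxr m (Phi xb).2 ->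
      KM (sig (Lc (Phi xb)) u).
Proof.
move=> nab ntb.
have [A [_ [gam [[gc' [inj' _]] [img [g0 g1]]]]]] := arcw I I nab.
pose phi t := Phi (gam t).
have phic : {within (@unit_interval R), continuous phi}.
  apply: (@within_continuous_comp _ _ _ (@unit_interval R) gam Phi) => //.
  by move=> z _; exact: Phi_cont.
have phiS : forall t, KM (phi t) by move=> t; exists (gam t).
have phinj : forall t t', (@unit_interval R) t -> (@unit_interval R) t' -> phi t = phi t' -> t = t'.
  by move=> t t' ut ut' /Phi_inj; exact: inj'.
have u1 : (@unit_interval R) 1 by apply/andP; split; lra.
have u0 : (@unit_interval R) 0 by apply/andP; split; lra.
have p1 : phi 1 = Phi xb by rewrite /phi g1.
have p0 : phi 0 = Phi xa by rewrite /phi g0.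
case: (pselect (exists2 t, (@unit_interval R) t & phi t = topM)) => [[t ut pt]|nt].
- have t1 : t < 1.
    move: ut => /andP[_ t1]; rewrite lt_neqAle t1 andbT; apply/eqP => e.
    by apply: ntb; rewrite -p1 -e.
  move: ut => /andP[t0' _].
  exists 0; first by left.
  move=> u u0' hu; rewrite -p1.
  apply: (arc_leg (S := KM) (t0 := t)) => //.
  + exact: KM_M.
  + exact: ltW.
  + apply: continuous_subspaceW phic; apply: sub_unit => //.
  + move=> t' /andP[h1 h2] e; have ut' : (@unit_interval R) t' by apply/andP; split; lra.
    have := phinj _ _ ut' (ltac:(apply/andP; split; lra) : (@unit_interval R) t).
    by rewrite e pt => /(_ erefl); lra.
  + by rewrite pt /= p1.
- have nt' : forall t, 0 <= t <= 1 -> phi t <> topM by move=> t ut e; apply: nt; exists t.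
  have hL := leg_const KM_M ler01 (continuous_subspaceW (sub_unit (lexx 0) (lexx 1)) phic)
    (fun t _ => phiS t) nt'.
  exists (Phi xa).2.
    right; split => //; first by rewrite -p0; apply: nt'; apply/andP; split; lra.
    by rewrite -p0 -p1; apply: hL; apply/andP; split; lra.
  move=> u u0' hu; rewrite -p1.
  apply: (arc_leg (S := KM) (t0 := 0)) => //.
  + exact: KM_M.
  + by move=> t' /andP[h1 h2]; apply: nt'; apply/andP; split; lra.
  + by rewrite p0 p1.
Qed.

Lemma minmax_cases (m y u : R) : minr m y <= u <= maxr m y ->
  (m <= u <= y) \/ (y <= u <= m).
Proof.
move=> /andP[]; rewrite ge_min le_max => /orP[h1|h1] /orP[h2|h2];
  case: (lerP m y) => h; [left|right|left|right|left|right|left|right];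
  apply/andP; split; lra.
Qed.

Lemma minmax_intro (m y u : R) : (m <= u <= y) \/ (y <= u <= m) ->
  minr m y <= u <= maxr m y.
Proof. by rewrite ge_min le_max => -[] /andP[h1 h2]; rewrite h1 h2 ?orbT. Qed.

Hypothesis two : exists x y : T, x <> y.

Lemma setup : exists (c a sq : R), [/\ cantor_set c, 0 < a, a < sq, sq <= 1 &
  forall u, a <= u <= sq -> KM (sig c u)].
Proof.
have [x1 [x2 n12]] := two.
have [xa [xb [nab ntb]]] : exists xa xb, xa <> xb /\ Phi xb <> topM.
  case: (pselect (Phi x2 = topM)) => h; last by exists x1, x2.
  exists x2, x1; split; first by move=> e; apply: n12.
  by move=> e; apply: n12; apply: Phi_inj; rewrite e h.
have [m hm hK] := arc_seg nab ntb.
have [yb0 yb1 cc eb] := M_nontop (Phi_M xb) ntb.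
have [mI mne] : 0 <= m <= 1 /\ m <> (Phi xb).2.
  case: hm => [->|[em nta eL]]; first by split; [apply/andP; split; lra | lra].
  have [ya0 ya1 _ ea] := M_nontop (Phi_M xa) nta.
  split; first by rewrite em; apply/andP; split; lra.
  move=> e; apply: nab; apply: Phi_inj; rewrite ea eb -em e eL //.
exists (Lc (Phi xb)).
case: (lerP m (Phi xb).2) => h.
- exists ((m + (Phi xb).2) / 2), (Phi xb).2; split; [exact: cc| | | |].
  + lra.
  + have : m < (Phi xb).2 by rewrite lt_neqAle h andbT; apply/eqP.
    lra.
  + exact: yb1.
  move=> u hu; apply: hK; first lra.
  by apply: minmax_intro; left; apply/andP; split; lra.
- exists ((m + (Phi xb).2) / 2), m; split; [exact: cc| | | |].
  + lra.
  + lra.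
  + by case/andP: mI.
  move=> u hu; apply: hK; first lra.
  by apply: minmax_intro; right; apply/andP; split; lra.
Qed.

Hypothesis endd : closure (end_points [set: T]) = [set: T].

Lemma main_false : False.
Proof.
have [c [a [sq [cc a0 asq sq1 hK]]]] := setup.
pose sp := (a + sq) / 2.
pose rho2 z := (rho z).2.
have rho2c : {within MM, continuous rho2}.
  apply: (@within_continuous_comp _ _ _ MM rho (fun z : R * R => z.2)).
  - by move=> z _; exact: snd_cont.
  - exact: rho_cont.
have rid2 : forall s, a <= s <= sq -> rho2 (sig c s) = s.
  by move=> s hs; rewrite /rho2 rho_id //; exact: hK.
pose eps := minr ((sp - a) / 2) ((sq - sp) / 4).
have e1 : eps <= (sp - a) / 2 by rewrite /eps ge_min lexx.
have e2 : eps <= (sq - sp) / 4 by rewrite /eps ge_min lexx orbT.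
have epos : 0 < eps by rewrite /eps lt_min; apply/andP; split; rewrite /sp; lra.
have [d d0 hd] := unif rho2c cc (ltW a0) sq1 rid2 epos.
have [xp _ exp] : KM (sig c sp) by apply: hK; rewrite /sp; apply/andP; split; lra.
have sp0 : sp != 0 by rewrite /sp; apply/eqP; lra.
have hL : (Lc (Phi t)) @[t --> xp] --> c.
  have pc : Phi t @[t --> xp] --> Phi xp by apply: Phi_cont.
  have hc : Lc z @[z --> Phi xp] --> c.
    rewrite -{1}(Lc_sig c sp0) -exp; apply: Lc_cont; rewrite exp //.
  exact: (cvg_comp _ _ pc hc).
have hY : ((Phi t).2) @[t --> xp] --> sp.
  have pc : (Phi t).2 @[t --> xp] --> (Phi xp).2 by apply: Phi2_cont.
  by rewrite exp in pc.
have n1 : \forall t \near xp, `|c - Lc (Phi t)| < d.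
  by have := cvgr_dist_lt _ _ hL _ d0; apply; exact: nbhs_filter.
have n2 : \forall t \near xp, `|sp - (Phi t).2| < eps.
  by have := cvgr_dist_lt _ _ hY _ epos; apply; exact: nbhs_filter.
have nb := @filterI _ _ (nbhs_filter xp) _ _ n1 n2.
have : closure (end_points [set: T]) xp by rewrite endd.
move=> /(_ _ nb) [e [ee [/= h1 h2]]].
pose ye := (Phi e).2.
have [ye_lo ye_hi] : sp - eps < ye /\ ye < sp + eps.
  by move: h2; rewrite ltr_distl -/ye => /andP[? ?]; split; lra.
have nte : Phi e <> topM by move=> E; move: ye_lo; rewrite /ye E /= /sp; lra.
have [ye0 ye1 cc' ee'] := M_nontop (Phi_M e) nte.
set c' := Lc (Phi e) in cc' ee' h1.
have [xa0 _ exa] : KM (sig c a) by apply: hK; apply/andP; split; lra.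
have nae : xa0 <> e.
  by move=> E; move: ye_lo; rewrite /ye -E exa /= /sp; lra.
have [m hm hK1] := arc_seg nae nte.
have m_le : 0 <= m <= a.
  case: hm => [->|[-> _ _]]; first by apply/andP; split; lra.
  by rewrite exa /=; apply/andP; split; lra.
pose lo := maxr a (ye / 2).
have lo0 : 0 < lo by rewrite /lo lt_max a0.
have loa : a <= lo by rewrite /lo le_max lexx.
have lo_ye : lo < ye by rewrite /lo gt_max; apply/andP; split; rewrite /ye /sp; lra.
have K1 : forall u, lo <= u <= ye -> KM (sig c' u).
  move=> u /andP[u1 u2]; apply: hK1; first lra.
  by apply: minmax_intro; left; apply/andP; split; lra.
have F1 : a < ye by rewrite /sp in ye_lo e1; lra.
have F3 : ye + eps < sq by rewrite /sp in ye_hi e2; lra.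
have F4 : 0 < ye - eps by rewrite /sp in ye_lo e1; lra.
have F2 : ye <= sq by apply: ltW; apply: le_lt_trans F3; rewrite lerDl ltW.
pose psi s := rho (sig c' s).
have c'01 := cantor01 cc'.
have inI : forall t, ye <= t <= sq -> 0 <= t <= 1.
  move=> t /andP[t1 t2]; apply/andP; split; first exact: le_trans (ltW ye0) t1.
  exact: le_trans t2 sq1.
have psic : {within `[ye, sq], continuous psi}.
  apply: (@wcomp _ _ _ _ `[ye, sq] MM (sig c') rho).
  - by apply: sig_cont => // t; rewrite /= itvP'; exact: inI.
  - by move=> t; rewrite /= itvP' => /inI ht; apply: sig_M.
  - exact: rho_cont.
have dc : `|c - c'| < d by [].
have psiY : forall s, ye <= s <= sq -> s - eps < (psi s).2.
  move=> s hs; move: (hs) => /andP[s1 s2].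
  have has : a <= s <= sq by rewrite s2 andbT; exact: ltW (lt_le_trans F1 s1).
  have := hd c' cc' dc s has.
  by rewrite /rho2 -/(psi s) => /ltr_distlCBl.
have psint : forall s, ye <= s <= sq -> psi s <> topM.
  move=> s hs E; have := psiY s hs; rewrite E /=; move: hs => /andP[s1 _].
  have : ye - eps <= s - eps by rewrite lerD2r.
  move: F4; lra.
have psiye : psi ye = Phi e by rewrite /psi -ee' rho_id //; exists e.
have hLc := leg_const KM_M F2 psic (fun t _ => rho_KM _) psint.
have yeI : ye <= ye <= sq by rewrite lexx F2.
have sqI : ye <= sq <= sq by rewrite lexx F2.
have Lsq : Lc (psi sq) = c' by rewrite -(hLc ye yeI) psiye.
pose ys := (psi sq).2.
have ys_gt : ye < ys.
  have := psiY sq sqI; rewrite -/ys => h.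
  apply: lt_trans h; move: F3; lra.
have [_ ys1 _ _] := M_nontop (KM_M (rho_KM (sig c' sq))) (psint sq sqI).
have K2 : forall u, ye <= u <= ys -> KM (sig c' u).
  move=> u /andP[u1 u2]; rewrite -Lsq.
  apply: (arc_leg (S := KM) (t0 := ye)) => //.
  - exact: KM_M.
  - by move=> t _; exact: rho_KM.
  - by move=> t /andP[t1 t2]; apply: psint; rewrite t2 ltW.
  - exact: lt_le_trans ye0 u1.
  - by apply: minmax_intro; left; rewrite psiye -/ye -/ys u1 u2.
apply: (endc (lo := lo) (hi := ys) (y := ye) ee cc') => //.
- exact: ltW.
- move=> u /andP[u1 u2]; case: (lerP u ye) => hu.
  + by apply: K1; rewrite u1 hu.
  + by apply: K2; rewrite u2 ltW.
Qed.
End Main.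

End Helpers.

Theorem mainTheorem6 (R : realType) (T : pseudoMetricType R)
  (hT : hausdorff_space T) (C : set T) (f : T -> T) :
  lelek_fan [set: T] ->
  continuum C -> @cantor_fan R T C ->
  embed_on [set: T] f -> range f `<=` C ->
  ~ (exists r : T -> T, continuous r /\ range r `<=` range f /\
       (forall y, range f y -> r y = y)).
Proof.
move=> [[[[_ [arcw _]] _] [v [ramv _]]] endd] _ [g [[gc [_ [gi [gic gii]]]] gC]].
move=> [fcw [_ [fi [fic fii]]]] fsub [r [rc [rf rid]]].
have fc : continuous f by apply/continuous_subspace_setT.
have two : exists x y : T, x <> y.
  case: ramv => a1 [a2 [a3 [A1 [A2 [A3 [[h1 _ _] _]]]]]].
  case: h1 => gam [[_ [inj _]] [_ [g0 g1]]].
  exists v, a1 => e.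
  have : (0 : R)%R = 1%R.
    apply: inj; rewrite ?g0 ?g1 //; rewrite /unit_interval /=;
      apply/andP; split; rewrite ?Order.POrderTheory.lexx ?Num.Theory.ler01 //.
  by move/eqP; rewrite eq_sym GRing.oner_eq0.
apply: (Helpers.main_false gc gii gic fc (fun x => fii x I) fic _ rc rf rid arcw two endd).
by rewrite gC.
Qed.
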